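(* The family of decidable safety constraints is a family with a universal detector, i.e. there is a detector $u$ such that $\{C_u(x):x\in|u|\}$ is exactly the set of decidable safety constraints.
   Context: Fix a finite nonempty set $N$; $N^+$ the nonempty finite words, $N^{\mathbb N}$ the streams; $s[m{:}]$ the suffix; $n^{-1}\cdot A=\{u:nu\in A\}$; a set of words is prefix-free if no proper prefix (including the empty word) of a member is a member. Let $\mathbf 1=\{\Downarrow\}$. A detector is a set $|a|$ with $a:|a|\to(\mathbf 1+|a|)^N$. The final detector $\omega$ has carrier $\Omega$ = the set of prefix-free subsets of $N^+$, with $\omega(P)(n)=\Downarrow$ if $n\in P$, else $n^{-1}\cdot P$. For $s\in N^{\mathbb N}$, $\mathrm{Join}([s],a)$ maps $(t,y)\in\{s[k{:}]\}\times|a|$ to $\Downarrow$ if $a(y)(t(0))=\Downarrow$, else $(t[1{:}],a(y)(t(0)))$; iterates $g^{(1)}=g$, $g^{(k+1)}(z)=\Downarrow$ if $g^{(k)}(z)=\Downarrow$, else $g(g^{(k)}(z))$. $C_a(x)=\{s:\mathrm{Join}([s],a)^{(k)}(s,x)\ne\Downarrow\ \forall k\ge1\}$. A safety constraint $S$ is decidable if $S=C_\omega(P)$ for some $P\in\Omega$ that is a decidable (recursive) set of words. A family $\mathcal F$ of safety constraints is a family with a universal detector if $\mathcal F=\{C_a(x):x\in|a|\}$ for some detector $a$. *)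

(* Defs.v *)
From Stdlib Require Cantor.
From mathcomp Require Import all_boot.
Set Implicit Arguments. Unset Strict Implicit. Unset Printing Implicit Defensive.

(* Computability: partial recursive functions nat -> nat, built from    *)
(* zero, successor, Cantor unpairing projections, pairing, composition, *)
(* primitive recursion and unbounded minimisation (a standard complete  *)
(* basis for the partial recursive functions, tuples coded by Cantor).  *)
Inductive prf : Type :=
| PZero | PSucc | PFst | PSnd
| PPair of prf & prf
| PComp of prf & prf
| PRec  of prf & prf      (* <a,0> |-> f a ; <a,n+1> |-> g <a,<n,h(a,n)>> *)
| PMu   of prf.

Inductive peval : prf -> nat -> nat -> Prop :=
| ev_zero x : peval PZero x 0
| ev_succ x : peval PSucc x x.+1
| ev_fst x : peval PFst x (Cantor.of_nat x).1
| ev_snd x : peval PSnd x (Cantor.of_nat x).2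
| ev_pair f g x a b : peval f x a -> peval g x b ->
    peval (PPair f g) x (Cantor.to_nat (a, b))
| ev_comp f g x y z : peval g x y -> peval f y z -> peval (PComp f g) x z
| ev_rec f g x r : prec_eval f g (Cantor.of_nat x).1 (Cantor.of_nat x).2 r ->
    peval (PRec f g) x r
| ev_mu f x n : peval f (Cantor.to_nat (x, n)) 0 ->
    (forall m, m < n -> exists k, peval f (Cantor.to_nat (x, m)) k.+1) ->
    peval (PMu f) x n
with prec_eval : prf -> prf -> nat -> nat -> nat -> Prop :=
| pr_zero f g a r : peval f a r -> prec_eval f g a 0 r
| pr_succ f g a n r r' : prec_eval f g a n r ->
    peval g (Cantor.to_nat (a, Cantor.to_nat (n, r))) r' ->
    prec_eval f g a n.+1 r'.

Section Detectors.
Variable N : finType.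

Fixpoint word_code (w : seq N) : nat :=
  match w with
  | [::] => 0
  | n :: w' => (Cantor.to_nat (nat_of_ord (enum_rank n), word_code w')).+1
  end.

Definition recursive_set (P : seq N -> bool) : Prop :=
  exists c : prf, forall w, peval c (word_code w) (nat_of_bool (P w)).

Definition prefix_free_plus (P : seq N -> bool) : Prop :=
  P [::] = false /\
  forall w, P w -> forall k, k < size w -> P (take k w) = false.

Definition Omega := {P : seq N -> bool | prefix_free_plus P}.

Definition deriv (n : N) (P : seq N -> bool) : seq N -> bool :=
  fun u => P (n :: u).

Lemma deriv_pf (P : Omega) (n : N) :
  proj1_sig P [:: n] = false -> prefix_free_plus (deriv n (proj1_sig P)).
Proof.
case: P => P [P0 Ppf] /= Pn; split; first by [].
move=> w Pw k lt_k; rewrite /deriv.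
have := Ppf (n :: w) Pw k.+1 lt_k. by [].
Qed.

(* Detectors: a carrier with a : |a| -> (1 + |a|)^N ; None stands for ⇓. *)
Record detector : Type := Detector {
  carrier : Type;
  dstep : carrier -> N -> option carrier
}.

Definition omega_step (P : Omega) (n : N) : option Omega :=
  match boolP (proj1_sig P [:: n]) with
  | AltTrue _ => None
  | AltFalse h => Some (exist _ (deriv n (proj1_sig P)) (deriv_pf (negbTE h)))
  end.

Definition omega : detector := @Detector Omega omega_step.

Definition stream := nat -> N.

Definition join (a : detector) (z : stream * carrier a)
  : option (stream * carrier a) :=
  match dstep z.2 (z.1 0) with
  | None => None
  | Some y' => Some (fun m => z.1 m.+1, y')
  end.

Fixpoint join_iter (a : detector) (k : nat) (z : stream * carrier a)
  : option (stream * carrier a) :=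
  match k with
  | 0 => Some z  (* unused: only k >= 1 is ever considered *)
  | 1 => join z
  | k'.+1 => match join_iter k' z with
             | None => None
             | Some z' => join z'
             end
  end.

Definition C (a : detector) (x : carrier a) : stream -> Prop :=
  fun s => forall k, 1 <= k -> join_iter k (s, x) <> None.

Definition decidable_safety (S : stream -> Prop) : Prop :=
  exists P : Omega, recursive_set (proj1_sig P) /\
    forall s, S s <-> @C omega P s.

End Detectors.

(* Main.v *)
Require Import Defs.
From mathcomp Require Import all_boot.
From Stdlib Require Cantor.

Section U.
Variable N : finType.

Fixpoint pconst (k : nat) : prf :=
  match k with 0 => PZero | k'.+1 => PComp PSucc (pconst k') end.

Lemma pconst_ev k x : peval (pconst k) x k.
Proof.
elim: k => [|k IH] /=; first exact: ev_zero.
apply: ev_comp; [exact: IH| exact: ev_succ].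
Qed.

Lemma pid_ev x : peval (PPair PFst PSnd) x x.
Proof.
have E := Cantor.cancel_to_of x.
have H : peval (PPair PFst PSnd) x (Cantor.to_nat ((Cantor.of_nat x).1, (Cantor.of_nat x).2)).
  apply: ev_pair; [exact: ev_fst | exact: ev_snd].
by rewrite -surjective_pairing E in H.
Qed.

Lemma rec_deriv (P : seq N -> bool) (n : N) :
  recursive_set P -> recursive_set (deriv n P).
Proof.
case=> c Hc.
exists (PComp c (PComp PSucc (PPair (pconst (enum_rank n)) (PPair PFst PSnd)))).
move=> w; rewrite /deriv.
apply: ev_comp; last exact: (Hc (n :: w)).
apply: ev_comp; last exact: ev_succ.
apply: ev_pair; [exact: pconst_ev | exact: pid_ev].
Qed.

Definition UC := {P : Omega N | recursive_set (proj1_sig P)}.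

Definition ustep (x : UC) (n : N) : option UC :=
  match boolP (proj1_sig (proj1_sig x) [:: n]) with
  | AltTrue _ => None
  | AltFalse h => Some (exist _ (exist _ (deriv n (proj1_sig (proj1_sig x)))
                         (deriv_pf (negbTE h)))
                         (@rec_deriv _ n (proj2_sig x)))
  end.

Definition u : detector N := @Detector N UC ustep.

Lemma ustep_rel (x : UC) n :
  match ustep x n, omega_step (proj1_sig x) n with
  | None, None => True
  | Some y, Some P => proj1_sig y = P
  | _, _ => False
  end.
Proof.
rewrite /ustep /omega_step.
by destruct (boolP (sval (sval x) [:: n])).
Qed.

Definition rel (a : option (stream N * UC)) (b : option (stream N * Omega N)) :=
  match a, b with
  | None, None => True
  | Some (t, y), Some (t', P) => t = t' /\ proj1_sig y = P
  | _, _ => False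
  end.

Lemma join_rel a b : rel a b ->
  rel (obind (@join N u) a) (obind (@join N (omega N)) b).
Proof.
case: a => [[t y]|]; case: b => [[t' P]|] //= [<- <-].
rewrite /join /=.
have := ustep_rel y (t 0).
case: (ustep y (t 0)) => [y'|]; case: (omega_step _ _) => [P'|] //=.
Qed.

Lemma join_iterS (a : detector N) k z :
  join_iter k.+1 z = obind (@join N a) (join_iter k z).
Proof. by case: k. Qed.

Lemma iter_rel k s (x : UC) :
  rel (@join_iter N u k (s, x)) (@join_iter N (omega N) k (s, proj1_sig x)).
Proof.
elim: k => [|k IH]; first by [].
rewrite !join_iterS; exact: join_rel.
Qed.

Lemma C_u (x : UC) s : @C N u x s <-> @C N (omega N) (proj1_sig x) s.
Proof.
split=> H k hk; have := iter_rel k s x; have := H k hk;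
  set A := join_iter k _; set B := join_iter k _;
  by case: A => [[? ?]|]; case: B => [[? ?]|].
Qed.

End U.

Theorem mainTheorem18 (N : finType) (n0 : N) :
  exists u : detector N,
    forall S : stream N -> Prop,
      (exists x : carrier u, forall s, S s <-> C x s) <-> decidable_safety S.
Proof.
exists (u N) => S; split.
- case=> x Hx; exists (proj1_sig x); split; first exact: (proj2_sig x).
  move=> s; rewrite Hx; exact: C_u.
- case=> P [HP HS]; exists (exist _ P HP : UC N) => s.
  rewrite HS; have := @C_u N (exist _ P HP : UC N) s; simpl; tauto.
Qed.
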